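(* Let $(X,\|\cdot\|)$ be a finite-dimensional Banach space. Then $X$ is convex if and only if for every sequence $\{v_n\}_{n\in\mathbb{N}}$ of vectors in $X$ such that $\|v_{n+m}\|\le\|v_n+v_m\|$ for all $n,m\in\mathbb{N}$, the limit $\lim_{n\to\infty}\frac{v_n}{n}$ exists.
   Context: $\mathbb{N}=\{1,2,3,\dots\}$. A Banach space $X$ is called convex if for all $u,v\in X$ with $u\neq v$ and $\|u\|=\|v\|=1$ we have $\|u+v\|<2$. *)

(* Defs.v *)
From HB Require Import structures.
From mathcomp Require Import all_boot all_order all_algebra.
From mathcomp Require Import all_classical all_reals all_analysis.
Set Implicit Arguments. Unset Strict Implicit. Unset Printing Implicit Defensive.
Import Order.TTheory GRing.Theory Num.Theory.
Import numFieldNormedType.Exports.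
Local Open Scope ring_scope.

Definition finite_dimensional (R : realType) (V : normedModType R) : Prop :=
  exists (n : nat) (e : 'I_n -> V),
    forall v : V, exists c : 'I_n -> R, v = \sum_(i < n) c i *: e i.

(* Paper's definition: X is convex (strictly convex). *)
Definition convex_space (R : realType) (V : normedModType R) : Prop :=
  forall u v : V, u <> v -> `|u| = 1 -> `|v| = 1 -> `|u + v| < 2.

(* Main.v *)
Require Import Defs.
From HB Require Import structures.
From mathcomp Require Import all_boot all_order all_algebra.
From mathcomp Require Import all_classical all_reals all_analysis.
Import Order.TTheory GRing.Theory Num.Theory.
Import numFieldNormedType.Exports.
Local Open Scope ring_scope.
From mathcomp Require Import lra zify.
Local Open Scope classical_set_scope.

Lemma lip_cont (R : realType) (U W : normedModType R) (f : U -> W) (k : R) :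
  (forall x y, `|f x - f y| <= k * `|x - y|) -> continuous f.
Proof.
move=> H x; apply/cvgrPdist_lt => e e0.
have k1 : 0 < `|k| + 1 by rewrite ltr_pwDr // normr_ge0.
near=> y.
apply: (le_lt_trans (H x y)).
apply: (le_lt_trans (_ : _ <= (`|k| + 1) * `|x - y|)).
  apply: ler_wpM2r; first exact: normr_ge0.
  by rewrite (le_trans (ler_norm k)) // lerDl.
rewrite -ltr_pdivlMl //.
near: y.
apply: cvgr_dist_lt => //.
by rewrite ?divr_gt0 ?mulr_gt0 ?invr_gt0.
Unshelve. all: by end_near. Qed.

Lemma prod_norm (R : realType) (U W : normedModType R) (p : U * W) : `|p| = Num.max `|p.1| `|p.2|.
Proof. by []. Qed.


Lemma cauchy_seq_cvg (R : realType) (V : completeNormedModType R) (u : nat -> V) :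
  (forall e : R, 0 < e -> exists N, forall n, (N <= n)%N -> `|u N - u n| < e) ->
  cvgn u.
Proof.
move=> H; apply/cauchy_cvgP; apply/cauchy_exP => e e0.
have [N HN] := H e e0.
exists (u N); exists N => // n /= Nn.
by rewrite -ball_normE /ball_ /=; apply: HN.
Qed.

Section Basis.
Variables (R : realType) (V : normedModType R).

Definition spanning {n} (e : 'I_n -> V) := forall v : V, exists c : 'I_n -> R, v = \sum_(i < n) c i *: e i.
Definition indep {n} (e : 'I_n -> V) := forall c : 'I_n -> R, \sum_(i < n) c i *: e i = 0 -> forall i, c i = 0.

Lemma basis_ex n (e : 'I_n -> V) : spanning e -> exists n' (e' : 'I_n' -> V), spanning e' /\ indep e'.
Proof.
elim: n e => [|n IH] e sp.
  by exists 0%N, e; split => // c _ [].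
have [ind|nind] := pselect (indep e).
  by exists n.+1, e.
have [c [c0 [i ci]]] : exists c : 'I_n.+1 -> R, \sum_(i < n.+1) c i *: e i = 0 /\ exists i, c i <> 0.
  apply: contra_notP nind => H c Hc i.
  by apply: contra_notP H => ci; exists c; split => //; exists i.
apply: (IH (fun k => e (lift i k))) => v.
have [d ->] := sp v.
exists (fun k => d (lift i k) - d i * (c i)^-1 * c (lift i k)).
rewrite (bigD1_ord i) //=.
move: c0; rewrite (bigD1_ord i) //= => /eqP; rewrite addr_eq0 => /eqP c0.
have -> : e i = - (c i)^-1 *: \sum_(k < n) c (lift i k) *: e (lift i k).
  by rewrite scaleNr -scalerN -c0 scalerA mulVf ?scale1r //; apply/eqP.
rewrite scalerA scaler_sumr addrC -big_split /=.
apply: eq_bigr => k _.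
by rewrite scalerA scalerBl mulrN mulNr scaleNr.
Qed.
End Basis.
Arguments spanning {R V n}.
Arguments indep {R V n}.


Section Coord.
Variables (R : realType) (V : normedModType R) (n : nat) (e : 'I_n -> V).

Definition L (c : 'rV[R]_n) : V := \sum_(i < n) c ord0 i *: e i.

Lemma coord_le (c : 'rV[R]_n) i : `|c ord0 i| <= `|c|.
Proof.
have /mapP[j Hj ->] : `|c ord0 i| \in [seq `|c x.1 x.2| | x : 'I_1 * 'I_n].
  by apply/mapP; exists (ord0, i) => //=; rewrite mem_enum.
by rewrite [leRHS]/Num.norm /= mx_normrE; apply/bigmax_geP; right => /=; exists j.
Qed.

Lemma LB c c' : L c - L c' = L (c - c').
Proof.
by rewrite /L -sumrB; apply: eq_bigr => i _; rewrite !mxE scalerBl.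
Qed.

Lemma LZ a c : L (a *: c) = a *: L c.
Proof.
by rewrite /L scaler_sumr; apply: eq_bigr => i _; rewrite !mxE scalerA.
Qed.

Definition Kc := \sum_(i < n) `|e i|.

Lemma L_lip c c' : `|L c - L c'| <= Kc * `|c - c'|.
Proof.
rewrite LB /L /Kc mulr_suml.
apply: le_trans (ler_norm_sum _ _ _) _.
apply: ler_sum => i _; rewrite normrZ mulrC.
by apply: ler_wpM2l; [exact: normr_ge0 | exact: coord_le].
Qed.

Lemma normL_cont : continuous (fun c => `|L c|).
Proof.
apply: (@lip_cont _ _ _ _ Kc) => x y.
exact: le_trans (ler_dist_dist _ _) (L_lip _ _).
Qed.

Lemma lower_bound : indep e -> exists2 m, 0 < m & forall c, m * `|c| <= `|L c|.
Proof.
move=> ind.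
pose S := [set c : 'rV[R]_n | `|c| = 1].
have Sunit c : c != 0 -> S (`|c|^-1 *: c).
  move=> c0; rewrite /S /= normrZ normfV normr_id mulVf //.
  by rewrite normr_eq0.
have [[c1 Sc1]|S0] := pselect (S !=set0); last first.
  exists 1 => // c; rewrite mul1r.
  have [->|c0] := eqVneq c 0; first by rewrite normr0 normr_ge0.
  by exfalso; apply: S0; exists (`|c|^-1 *: c); apply: Sunit.
have cS : compact S.
  apply: (@bounded_closed_compact R n S).
    exists 1; split => // M M1 c; rewrite /S /= => ->; exact: ltW.
  apply: (@preimage_closed _ _ (fun c : 'rV[R]_n => `|c|) [set 1]); last exact: closed_eq.
  by move=> x _; apply: norm_continuous.
have [c0 /set_mem Sc0 minc0] := compact_EVT_min (ex_intro _ c1 Sc1) cS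
   (continuous_subspaceT normL_cont).
exists (`|L c0|).
  rewrite normr_gt0; apply/negP => /eqP Lc0.
  have c00 : c0 = 0.
    apply/matrixP => i j; rewrite (ord1 i) mxE.
    exact: (ind (fun k => c0 ord0 k) Lc0 j).
  by move: Sc0; rewrite /S /= c00 normr0 => /eqP; rewrite eq_sym oner_eq0.
move=> c; have [->|cn0] := eqVneq c 0; first by rewrite normr0 mulr0 normr_ge0.
have := minc0 _ (mem_set (Sunit c cn0)); rewrite LZ normrZ normfV normr_id.
by rewrite ler_pdivlMl ?normr_gt0 // mulrC.
Qed.
End Coord.
Arguments L {R V n}.
Arguments Kc {R V n}.


Section Modulus.
Variables (R : realType) (V : normedModType R) (n : nat) (e : 'I_n -> V).

Lemma gen_cont (a b : R) :
  continuous (fun p : 'rV[R]_n * 'rV[R]_n => `|a *: L e p.1 + b *: L e p.2|).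
Proof.
apply: (@lip_cont _ _ _ _ ((`|a| + `|b|) * Kc e)) => p q.
apply: le_trans (ler_dist_dist _ _) _.
have -> : a *: L e p.1 + b *: L e p.2 - (a *: L e q.1 + b *: L e q.2)
   = a *: (L e p.1 - L e q.1) + b *: (L e p.2 - L e q.2).
  by rewrite !scalerBr addrACA opprD.
apply: le_trans (ler_normD _ _) _.
rewrite !normrZ mulrDl.
rewrite mulrDl -!mulrA.
have h1 : `|p.1 - q.1| <= `|p - q| by rewrite [leRHS]/Num.norm /= le_max lexx.
have h2 : `|p.2 - q.2| <= `|p - q| by rewrite [leRHS]/Num.norm /= le_max lexx orbT.
apply: lerD; apply: ler_wpM2l; try exact: normr_ge0.
  apply: le_trans (@L_lip _ _ _ e _ _) _; apply: ler_wpM2l => //.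
  by rewrite /Kc sumr_ge0.
apply: le_trans (@L_lip _ _ _ e _ _) _; apply: ler_wpM2l => //.
by rewrite /Kc sumr_ge0.
Qed.

Lemma rowL (c : 'I_n -> R) : \sum_(i < n) c i *: e i = L e (\row_i c i).
Proof. by apply: eq_bigr => i _; rewrite mxE. Qed.

Lemma modulus : convex_space V -> spanning e -> indep e ->
  forall eps, 0 < eps -> exists2 rho, 0 < rho &
    forall x y : V, `|x| = 1 -> `|y| = 1 -> eps <= `|x - y| -> `|x + y| <= 2 - rho.
Proof.
move=> conv sp ind eps eps0.
have [m m0 mle] := @lower_bound _ _ _ e ind.
have c1 : continuous (fun p : 'rV[R]_n * 'rV[R]_n => `|L e p.1|).
  suff -> : (fun p : 'rV[R]_n * 'rV[R]_n => `|L e p.1|) = (fun p => `|1 *: L e p.1 + 0 *: L e p.2|) by apply: gen_cont.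
  by apply: funext => p; rewrite scale1r scale0r addr0.
have c2 : continuous (fun p : 'rV[R]_n * 'rV[R]_n => `|L e p.2|).
  suff -> : (fun p : 'rV[R]_n * 'rV[R]_n => `|L e p.2|) = (fun p => `|0 *: L e p.1 + 1 *: L e p.2|) by apply: gen_cont.
  by apply: funext => p; rewrite scale1r scale0r add0r.
have c3 : continuous (fun p : 'rV[R]_n * 'rV[R]_n => `|L e p.1 - L e p.2|).
  suff -> : (fun p : 'rV[R]_n * 'rV[R]_n => `|L e p.1 - L e p.2|) = (fun p => `|1 *: L e p.1 + (-1) *: L e p.2|) by apply: gen_cont.
  by apply: funext => p; rewrite scale1r scaleN1r.
have c4 : continuous (fun p : 'rV[R]_n * 'rV[R]_n => `|L e p.1 + L e p.2|).
  suff -> : (fun p : 'rV[R]_n * 'rV[R]_n => `|L e p.1 + L e p.2|) = (fun p => `|1 *: L e p.1 + 1 *: L e p.2|) by apply: gen_cont.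
  by apply: funext => p; rewrite !scale1r.
pose K := [set p : 'rV[R]_n * 'rV[R]_n | `|L e p.1| = 1] `&`
          [set p : 'rV[R]_n * 'rV[R]_n | `|L e p.2| = 1] `&`
          [set p : 'rV[R]_n * 'rV[R]_n | eps <= `|L e p.1 - L e p.2|].
pose B := [set c : 'rV[R]_n | `|c| <= m^-1].
have cB : compact B.
  apply: (@bounded_closed_compact R n B).
    exists m^-1; split; first exact: num_real.
    by move=> M M1 c; rewrite /B /= => h; apply: le_trans h (ltW M1).
  apply: (@preimage_closed _ _ (fun c : 'rV[R]_n => `|c|) [set x | x <= m^-1]); last exact: closed_le.
  by move=> x _; apply: norm_continuous.
have KB : K `<=` B `*` B.
  move=> p [[h1 h2] _]; split; rewrite /B /= -(ler_pM2l m0) mulfV ?gt_eqF //.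
    by rewrite -h1; apply: mle.
  by rewrite -h2; apply: mle.
have cK : compact K.
  apply: (subclosed_compact _ (compact_setX cB cB) KB).
  apply: closedI; first apply: closedI.
  - apply: (@preimage_closed _ _ (fun p : 'rV[R]_n * 'rV[R]_n => `|L e p.1|) [set 1]); last exact: closed_eq.
    by move=> x _; apply: c1.
  - apply: (@preimage_closed _ _ (fun p : 'rV[R]_n * 'rV[R]_n => `|L e p.2|) [set 1]); last exact: closed_eq.
    by move=> x _; apply: c2.
  - apply: (@preimage_closed _ _ (fun p : 'rV[R]_n * 'rV[R]_n => `|L e p.1 - L e p.2|) [set x | eps <= x]); last exact: closed_ge.
    by move=> x _; apply: c3.
have repr x : exists c, x = L e c.
  by have [c ->] := sp x; exists (\row_i c i); apply: rowL.
have [[p0 Kp0]|K0] := pselect (K !=set0); last first.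
  exists 1 => // x y x1 y1 xy; exfalso; apply: K0.
  have [c xc] := repr x; have [c' yc] := repr y.
  by exists (c, c'); rewrite /K /= -xc -yc.
have [p1 /set_mem [[p11 p12] p13] maxp] := compact_EVT_max (ex_intro _ p0 Kp0) cK
   (continuous_subspaceT c4).
exists (2 - `|L e p1.1 + L e p1.2|).
  rewrite subr_gt0; apply: conv => // h.
  by move: p13 => /=; rewrite h subrr normr0 leNgt eps0.
move=> x y x1 y1 xy; rewrite subKr.
have [c xc] := repr x; have [c' yc] := repr y.
have := maxp (c, c'); rewrite /= -xc -yc; apply; apply: mem_set.
by rewrite /K /= -xc -yc.
Qed.
End Modulus.


Lemma fekete (R : realType) (a : nat -> R) : (forall n, 0 <= a n) ->
  (forall n m, (0 < n)%N -> (0 < m)%N -> a (n + m)%N <= a n + a m) ->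
  exists alpha : R, [/\ 0 <= alpha, (forall n, (0 < n)%N -> alpha * n%:R <= a n) &
    (forall d, 0 < d -> exists N, forall n, (N <= n)%N -> a n <= (alpha + d) * n%:R)].
Proof.
move=> a0 sub.
pose S := [set x : R | exists2 n, (0 < n)%N & x = a n / n%:R].
have S1 : S (a 1%N / 1%:R) by exists 1%N.
have lb0 : lbound S 0.
  by move=> x [n n0 ->]; rewrite divr_ge0.
have hS : has_inf S by split; [exists (a 1%N / 1%:R) | exists 0].
have Sle n : (0 < n)%N -> inf S * n%:R <= a n.
  move=> n0; have := ge_inf hS.2 (ex_intro2 _ _ n n0 erefl).
  by rewrite ler_pdivlMr ?ltr0n.
exists (inf S); split => //.
  by apply: lb_le_inf => //; exists (a 1%N / 1%:R).
move=> d d0.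
have [_ [k k0 ->] ek] := inf_adherent (divr_gt0 d0 (ltr0n _ 2)) hS.
have key q r : (0 < r)%N -> a (q * k + r)%N <= q%:R * a k + a r.
  move=> r0; elim: q => [|q IH]; first by rewrite mul0n add0n mul0r add0r.
  rewrite mulSn -addnA.
  apply: le_trans (sub _ _ k0 _) _; first by rewrite addn_gt0 r0 orbT.
  rewrite mulrSr mulrDl mul1r; lra.
pose M := \sum_(i < k.+1) a i.
have aM r : (r <= k)%N -> a r <= M.
  move=> rk; rewrite /M (bigD1 (Ordinal (rk : (r < k.+1)%N))) //= lerDl.
  by apply: sumr_ge0 => i _.
exists (maxn 1 (Num.truncn (2 * M / d)).+1) => n.
rewrite geq_max => /andP [n1 nM].
set q := ((n.-1) %/ k)%N; set r := ((n.-1) %% k).+1.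
have nqr : n = (q * k + r)%N.
  by rewrite /q /r addnS -divn_eq prednK.
have rk : (r <= k)%N by rewrite /r ltn_pmod.
have qk : ((q * k) <= n)%N by rewrite nqr leq_addr.
have h1 : a n <= q%:R * a k + M.
  by rewrite {1}nqr; apply: le_trans (key q r isT) _; rewrite lerD2l aM.
have h2 : q%:R * a k <= n%:R * (a k / k%:R).
  rewrite mulrCA [X in _ <= X]mulrC ler_wpM2r //.
  by rewrite ler_pdivlMr ?ltr0n // -natrM ler_nat.
have h3 : 2 * M / d < n%:R.
  have M0 : 0 <= 2 * M / d by rewrite divr_ge0 ?mulr_ge0 ?sumr_ge0 // ltW.
  by rewrite -truncn_lt_nat.
have h4 : M <= n%:R * (d / 2).
  rewrite ltr_pdivrMr // in h3; lra.
have h5 : n%:R * (a k / k%:R) <= n%:R * (inf S + d / 2).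
  by rewrite ler_wpM2l // ltW.
lra.
Qed.


Section Forward.
Variables (R : realType) (V : completeNormedModType R).

Lemma deficit_le (rho : R) (x y : V) s t : `|y| = 1 ->
  `|x + y| <= 2 - rho -> 0 <= s -> s <= t -> `|s *: x + t *: y| <= s + t - rho * s.
Proof.
move=> y1 xy s0 st.
have -> : s *: x + t *: y = s *: (x + y) + (t - s) *: y.
  by rewrite scalerDr scalerBl -addrA subrKC.

apply: le_trans (ler_normD _ _) _.
rewrite !normrZ y1 mulr1 (ger0_norm s0) ger0_norm ?subr_ge0 //.
have : s * `|x + y| <= s * (2 - rho) by rewrite ler_wpM2l.
lra.
Qed.

Lemma deficit (rho : R) (x y : V) s t m : `|x| = 1 -> `|y| = 1 ->
  `|x + y| <= 2 - rho -> 0 <= m -> m <= s -> m <= t -> 0 <= rho ->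
  `|s *: x + t *: y| <= s + t - rho * m.
Proof.
move=> x1 y1 xy m0 ms mt r0.
have s0 : 0 <= s by apply: le_trans ms.
have t0 : 0 <= t by apply: le_trans mt.
have [st|ts] := leP s t.
  have := @deficit_le rho x y s t y1 xy s0 st.
  have : rho * m <= rho * s by rewrite ler_wpM2l.
  lra.
have ts' : t <= s by apply: ltW.
have xy' : `|y + x| <= 2 - rho by rewrite addrC.
have := @deficit_le rho y x t s x1 xy' t0 ts'.
have : rho * m <= rho * t by rewrite ler_wpM2l.
rewrite addrC; lra.
Qed.

Lemma cvg_ratio (a : nat -> R) (alpha : R) :
  (forall n, (0 < n)%N -> alpha * n%:R <= a n) ->
  (forall d, 0 < d -> exists N, forall n, (N <= n)%N -> a n <= (alpha + d) * n%:R) ->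
  (fun n => a n / n%:R) @ \oo --> alpha.
Proof.
move=> lo up; apply/cvgrPdist_le => d d0.
have [N HN] := up d d0.
exists (maxn N 1) => // n /=; rewrite geq_max => /andP [Nn n1].
have n0 : (0 : R) < n%:R by rewrite ltr0n.
have h1 := lo n n1; have h2 := HN n Nn.
rewrite ler_norml; apply/andP; split.
  rewrite lerBrDl -lerBrDr ler_pdivrMr //; lra.
rewrite lerBlDl -lerBlDr ler_pdivlMr //; lra.
Qed.

End Forward.


Section Forward2.
Variables (R : realType) (V : completeNormedModType R).
Hypothesis modl : forall {eps : R}, 0 < eps -> exists2 rho : R, 0 < rho &
    forall x y : V, `|x| = 1 -> `|y| = 1 -> eps <= `|x - y| -> `|x + y| <= 2 - rho.

Lemma forward (v : nat -> V) :
  (forall n m : nat, (0 < n)%N -> (0 < m)%N -> `|v (n + m)%N| <= `|v n + v m|) ->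
  cvgn (fun n : nat => (n%:R)^-1 *: v n).
Proof.
move=> hv.
pose a n := `|v n|.
have a0 n : 0 <= a n by apply: normr_ge0.
have asub n m : (0 < n)%N -> (0 < m)%N -> a (n + m)%N <= a n + a m.
  by move=> n0 m0; apply: le_trans (hv n m n0 m0) (ler_normD _ _).
have [alpha [al0 lo up]] := @fekete _ a a0 asub.
have ratio := @cvg_ratio _ _ _ lo up.
pose u n := (a n)^-1 *: v n.
have yE : (fun n : nat => (n%:R)^-1 *: v n) = (fun n => (a n / n%:R) *: u n).
  apply: funext => n; rewrite /u scalerA.
  have [->|vn0] := eqVneq (v n) 0; first by rewrite !scaler0.
  by rewrite mulrAC mulfV ?mul1r // /a normr_eq0.
have [al00|alp] := eqVneq alpha 0.
  apply/cvg_ex; exists 0; apply/cvgrPdist_le => d d0.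
  have [N HN] := up d d0.
  exists (maxn N 1) => // n /=; rewrite geq_max => /andP [Nn n1].
  have := HN n Nn; rewrite al00 add0r.
  rewrite sub0r normrN normrZ normfV ger0_norm // -/(a n) => h.
  by rewrite mulrC ler_pdivrMr ?ltr0n.
rewrite yE.
have alp0 : 0 < alpha by rewrite lt_def alp al0.
apply: is_cvgZ; first exact: (cvgP _ ratio).
apply: cauchy_seq_cvg => eps eps0.
apply: contrapT => H.
have H' : forall N, exists2 n, (N <= n)%N & eps <= `|u N - u n|.
  move=> N; apply: contra_notP H => h; exists N => n Nn.
  by rewrite ltNge; apply/negP => le; apply: h; exists n.
have [rho rho0 hrho] := modl (divr_gt0 eps0 (ltr0n R 2)).
pose c := rho * alpha / 2.
have c0 : 0 < c by rewrite /c divr_gt0 // mulr_gt0.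
have [N0 HN0] := up c c0.
pose N := maxn N0 1.
have N1 : (0 < N)%N by rewrite /N leq_max orbT.
have N0N : (N0 <= N)%N by rewrite /N leq_max leqnn.
have [n Nn hn] := H' N.
have apos k : (0 < k)%N -> 0 < a k.
  by move=> k0; apply: lt_le_trans (lo k k0); rewrite mulr_gt0 // ltr0n.
have unit k : (0 < k)%N -> `|u k| = 1.
  move=> k0; rewrite /u normrZ normfV normr_id mulVf //.
  by rewrite gt_eqF // apos.
have vE k : (0 < k)%N -> v k = a k *: u k.
  by move=> k0; rewrite /u scalerA mulfV ?scale1r // gt_eqF // apos.
pose dd k := a k - alpha * k%:R.
have step j k : (N <= j)%N -> (j <= k)%N -> eps / 2 <= `|u k - u j| ->
    dd (k + j)%N <= dd k - c * N%:R.
  move=> Nj jk hkj.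
  have j0 : (0 < j)%N by apply: leq_trans Nj.
  have k0 : (0 < k)%N by apply: leq_trans jk.
  have h1 := hv k j k0 j0.
  rewrite (vE k k0) (vE j j0) in h1.
  have h2 : `|a k *: u k + a j *: u j| <= a k + a j - rho * (alpha * j%:R).
    apply: deficit (unit k k0) (unit j j0) _ _ _ _ (ltW rho0).
    - exact: hrho (unit k k0) (unit j j0) hkj.
    - by rewrite mulr_ge0 // ltW.
    - apply: le_trans (lo k k0); rewrite ler_wpM2l ?ler_nat // ltW.
    - exact: lo.
  have h3 : a j <= (alpha + c) * j%:R by apply: HN0; apply: leq_trans Nj.
  have h4 : c * N%:R <= c * j%:R by rewrite ler_wpM2l ?ler_nat // ltW.
  have e1 : c * j%:R = rho * (alpha * j%:R) / 2 by rewrite /c mulrAC -!mulrA.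
  rewrite /dd natrD mulrDr mulrDl in h3 *.
  have : a (k + j)%N <= a k + a j - rho * (alpha * j%:R) by apply: le_trans h1 h2.
  lra.
have iter i : exists k, (n <= k)%N /\ dd k <= dd n - i%:R * (c * N%:R).
  elim: i => [|i [k [nk hk]]]; first by exists n; rewrite mul0r subr0.
  have Nk : (N <= k)%N by apply: leq_trans nk.
  have [h|h1] := lerP (eps / 2) `|u k - u N|.
    exists (k + N)%N; split; first by apply: leq_trans nk (leq_addr _ _).
    have := step N k (leqnn _) Nk h; rewrite -natr1 mulrDl mul1r; lra.
  have [h|h2] := lerP (eps / 2) `|u k - u n|.
    exists (k + n)%N; split; first by apply: leq_trans nk (leq_addr _ _).
    have := step n k Nn nk h; rewrite -natr1 mulrDl mul1r; lra.
  exfalso.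
  have : `|u N - u n| <= `|u N - u k| + `|u k - u n|.
    by rewrite -(subrKA (u k)) ler_normD.
  rewrite [`|u N - u k|]distrC; lra.
have n0 : (0 < n)%N by apply: leq_trans Nn.
have ddpos k : (0 < k)%N -> 0 <= dd k by move=> k0; rewrite /dd subr_ge0 lo.
have cN0 : 0 < c * N%:R by rewrite mulr_gt0 // ltr0n.
have x0 : 0 <= dd n / (c * N%:R) by rewrite divr_ge0 // ?ddpos // ltW.
have /andP [_ hi] := truncn_itv x0.
have [k [nk hk]] := iter (Num.truncn (dd n / (c * N%:R))).+1.
rewrite ltr_pdivrMr // in hi.
have := ddpos k (leq_trans n0 nk).
lra.
Qed.
End Forward2.


Section Reverse.
Variables (R : realType) (V : normedModType R).

Lemma key_le (u w : V) s t : `|u| = 1 -> 2 <= `|u + w| -> 0 <= s -> s <= t ->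
  s + t <= `|s *: u + t *: w|.
Proof.
move=> u1 h2 s0 st.
have t0 : 0 <= t by apply: le_trans st.
have e : t *: (u + w) = (s *: u + t *: w) + (t - s) *: u.
  by rewrite scalerDr scalerBl addrAC subrKC addrC.
have h : `|t *: (u + w)| <= `|s *: u + t *: w| + (t - s).
  by rewrite e; apply: le_trans (ler_normD _ _) _; rewrite normrZ u1 mulr1 ger0_norm ?subr_ge0.
rewrite normrZ (ger0_norm t0) in h.
have : t * 2 <= t * `|u + w| by rewrite ler_wpM2l.
lra.
Qed.

Lemma key (u w : V) s t : `|u| = 1 -> `|w| = 1 -> 2 <= `|u + w| -> 0 <= s -> 0 <= t ->
  s + t <= `|s *: u + t *: w|.
Proof.
move=> u1 w1 h2 s0 t0.
have [st|ts] := leP s t; first exact: key_le.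
rewrite addrC [s *: u + _]addrC; apply: key_le => //; last exact: ltW.
by rewrite addrC.
Qed.

Lemma reverse : (forall v : nat -> V,
     (forall n m : nat, (0 < n)%N -> (0 < m)%N -> `|v (n + m)%N| <= `|v n + v m|) ->
     cvgn (fun n : nat => (n%:R)^-1 *: v n)) -> convex_space V.
Proof.
move=> H u w uw u1 w1; rewrite ltNge; apply/negP => h2.
pose al n : R := if odd n then n%:R else 0.
pose be n : R := if odd n then 0 else n%:R.
have albe n : al n + be n = n%:R by rewrite /al /be; case: (odd n); rewrite ?addr0 ?add0r.
have al0 n : 0 <= al n by rewrite /al; case: (odd n).
have be0 n : 0 <= be n by rewrite /be; case: (odd n).
pose v n := al n *: u + be n *: w.
have cond : forall n m : nat, (0 < n)%N -> (0 < m)%N -> `|v (n + m)%N| <= `|v n + v m|.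
  move=> n m _ _.
  have -> : v n + v m = (al n + al m) *: u + (be n + be m) *: w.
    by rewrite /v !scalerDl addrACA.
  apply: (le_trans _ (key u w _ _ u1 w1 h2 (addr_ge0 (al0 n) (al0 m)) (addr_ge0 (be0 n) (be0 m)))).
  apply: le_trans (ler_normD _ _) _.
  rewrite !normrZ u1 w1 !mulr1 !ger0_norm //.
  have := albe n; have := albe m; have := albe (n + m)%N; rewrite natrD; lra.
have /cvg_ex [l hl] := H v cond.
have uw0 : 0 < `|u - w| / 2 by rewrite divr_gt0 // normr_gt0 subr_eq0; apply/eqP.
have [N _ HN] := (proj1 (cvgrPdist_lt _ _)) hl _ uw0.
have y1 : (2 * N).+1%:R^-1 *: v (2 * N).+1 = u.
  rewrite /v /al /be mul2n /= odd_double /= scale0r addr0 scalerA mulVf ?scale1r //.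
have y2 : (2 * N).+2%:R^-1 *: v (2 * N).+2 = w.
  rewrite /v /al /be mul2n /= odd_double /= scale0r add0r scalerA mulVf ?scale1r //.
have h1 : `|l - u| < `|u - w| / 2.
  have := HN (2 * N).+1; rewrite y1; apply; rewrite /=; lia.
have h2' : `|l - w| < `|u - w| / 2.
  have := HN (2 * N).+2; rewrite y2; apply; rewrite /=; lia.
have : `|u - w| <= `|l - u| + `|l - w|.
  by rewrite -(subrKA l); apply: le_trans (ler_normD _ _) _; rewrite distrC.
lra.
Qed.
End Reverse.


Local Close Scope classical_set_scope.
Local Open Scope ring_scope.

Theorem mainTheorem2 (R : realType) (V : completeNormedModType R) :
  finite_dimensional V ->
  (convex_space V <->
   forall v : nat -> V,
     (forall n m : nat, (0 < n)%N -> (0 < m)%N -> `|v (n + m)%N| <= `|v n + v m|) ->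
     cvgn (fun n : nat => (n%:R)^-1 *: v n)).
Proof.
move=> [n [e sp]]; split; last exact: reverse.
move=> conv v hv.
have [n' [e' [sp' ind']]] := @basis_ex R V n e sp.
apply: (@forward R V _ v hv) => eps eps0.
exact: (@modulus R V n' e' conv sp' ind' eps eps0).
Qed.
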